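(* Let $p$ be a prime, let $h_1,h_2$ be relatively prime positive integers, $h=h_1+h_2$, and let $F$ be the 2-dimensional Lubin–Tate formal group over $\mathbb{Z}_p$ associated with $(h_1,h_2)$. Then its multiplication-by-$p$ endomorphism satisfies $$[p]_F(x_1,x_2)\equiv(px_1,px_2)\ \text{mod degree 2 terms}\quad\text{and}\quad [p]_F(x_1,x_2)\equiv\big(x_2^{p^{h_1}},x_1^{p^{h_2}}\big)\ \text{mod } p.$$ In particular $[p]_F$ belongs to the set $\mathcal{C}^{h_1,h_2}_{LT}$ of pairs $f(X)\in\mathbb{Z}_p[[x_1,x_2]]^2$ with $f(X)\equiv(px_1,px_2)$ mod degree 2 and $f(X)$ mod $p$ equal to $(x_1^{p^{h_1}},x_2^{p^{h_2}})$ or $(x_2^{p^{h_1}},x_1^{p^{h_2}})$.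
   Context: Let $L=(L_1,L_2)\in\mathbb{Q}_p[[x_1,x_2]]^2$ be given by $L_1=x_1+\sum_{k\ge1}p^{-2k}x_1^{p^{kh}}+\sum_{k\ge0}p^{-(2k+1)}x_2^{p^{h_1+kh}}$ and $L_2=x_2+\sum_{k\ge1}p^{-2k}x_2^{p^{kh}}+\sum_{k\ge0}p^{-(2k+1)}x_1^{p^{h_2+kh}}$. Its Jacobian at $0$ is the identity, so it has a compositional inverse $L^{-1}$, and the 2-dimensional Lubin–Tate formal group associated with $(h_1,h_2)$ is $F(X,Y)=L^{-1}(L(X)+L(Y))$, a 2-dimensional formal group with coefficients in $\mathbb{Z}_p$. The maps $[k]_F$ are defined by $[0]_F(X)=0$, $[1]_F(X)=X$, $[k]_F(X)=F(X,[k-1]_F(X))$ for $k\ge2$. *)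

(* Defs.v *)
From mathcomp Require Import all_boot all_algebra.
From mathcomp Require Export mpoly.

Set Implicit Arguments.
Unset Strict Implicit.
Unset Printing Implicit Defensive.

Import GRing.Theory Num.Theory.
Local Open Scope ring_scope.

(* (All series in the statement have coefficients in Q; membership in *)
(* Z_p of a rational coefficient = p-integrality, see [pint].)         *)
Definition ser (n : nat) := 'X_{1..n} -> rat.

Definition trunc n (d : nat) (f : ser n) : {mpoly rat[n]} :=
  \sum_(m : 'X_{1..n < d.+1}) f m *: 'X_[m].

(* composition f(g_1,...,g_n) of power series, meaningful when all g_i
   have zero constant term: the coefficient of a monomial of degree d
   only depends on the truncations at degree d. *)
Definition scomp n k (f : ser n) (g : 'I_n -> ser k) : ser k :=
  fun m => ((trunc (mdeg m) f) \mPo [tuple trunc (mdeg m) (g i) | i < n])@_m.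

Definition smon n (m0 : 'X_{1..n}) : ser n := fun m => (m == m0)%:R.
Definition svar n (i : 'I_n) : ser n := smon (U_(i))%MM.

Definition sadd n (f g : ser n) : ser n := fun m => f m + g m.

Definition i1 : 'I_2 := ord0.
Definition i2 : 'I_2 := ord_max.

(*  L_a = x_a + sum_{k>=1} p^{-2k} x_a^{p^{kh}}                        *)
(*            + sum_{k>=0} p^{-(2k+1)} x_b^{p^{hi+kh}}                 *)
(* with (a,b,hi) = (1,2,h1) for L_1 and (2,1,h2) for L_2.              *)
(* monomial of degree d is read off from the partial sum with N = d+1  *)
(* (all terms with k >= N have degree > d).                            *)
Definition Lpart (p h1 h2 : nat) (N : nat) (a b : 'I_2) (hi : nat)
  : {mpoly rat[2]} :=
  'X_a
  + \sum_(1 <= k < N) ((p%:R : rat) ^- (2 * k)) *: 'X_a ^+ (p ^ (k * (h1 + h2)))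
  + \sum_(0 <= k < N) ((p%:R : rat) ^- (2 * k).+1) *: 'X_b ^+ (p ^ (hi + k * (h1 + h2))).

Definition Lser (p h1 h2 : nat) (j : 'I_2) : ser 2 :=
  fun m => (if j == i1 then Lpart p h1 h2 (mdeg m).+1 i1 i2 h1
            else Lpart p h1 h2 (mdeg m).+1 i2 i1 h2)@_m.

Definition is_Linv (p h1 h2 : nat) (G : 'I_2 -> ser 2) : Prop :=
  [/\ forall i, G i 0%MM = 0,
      forall i, scomp (Lser p h1 h2 i) G = svar i
    & forall i, scomp (G i) (Lser p h1 h2) = svar i].

(* F(X,Y) = L^{-1}(L(X) + L(Y)), a pair of series in the 4 variables
   (x1, x2, y1, y2) = indices 0,1 (X) and 2,3 (Y). *)
Definition FLT (p h1 h2 : nat) (G : 'I_2 -> ser 2) : 'I_2 -> ser 4 :=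
  fun i => scomp (G i) (fun j =>
    sadd (scomp (Lser p h1 h2 j) (fun t => svar (lshift 2 t)))
         (scomp (Lser p h1 h2 j) (fun t => svar (rshift 2 t)))).

Fixpoint mulF (F : 'I_2 -> ser 4) (k : nat) : 'I_2 -> ser 2 :=
  match k with
  | 0 => fun _ _ => 0
  | k'.+1 =>
    if k' is 0 then fun i => svar i
    else fun i => scomp (F i) (fun t : 'I_(2 + 2) =>
           match split t with
           | inl a => svar a
           | inr b => mulF F k' b
           end)
  end.

(* r lies in Z_p (i.e. in Z_(p) = Q ∩ Z_p) *)
Definition pint (p : nat) (r : rat) : bool := ~~ (p %| `|denq r|)%N.
(* r = s mod p in Z_p:  (r - s)/p in Z_p *)
Definition congp (p : nat) (r s : rat) : bool := pint p ((r - s) / p%:R).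

Definition ser_congp (p : nat) (f g : 'I_2 -> ser 2) : Prop :=
  forall i m, congp p (f i m) (g i m).

Definition lin_p (p : nat) (f : 'I_2 -> ser 2) : Prop :=
  forall i (m : 'X_{1..2}), (mdeg m <= 1)%N -> f i m = p%:R * smon (U_(i))%MM m.

Definition frob_id (p h1 h2 : nat) : 'I_2 -> ser 2 :=
  fun i => if i == i1 then smon (U_(i1) *+ (p ^ h1))%MM
           else smon (U_(i2) *+ (p ^ h2))%MM.
Definition frob_sw (p h1 h2 : nat) : 'I_2 -> ser 2 :=
  fun i => if i == i1 then smon (U_(i2) *+ (p ^ h1))%MM
           else smon (U_(i1) *+ (p ^ h2))%MM.

Definition CLT (p h1 h2 : nat) (f : 'I_2 -> ser 2) : Prop :=
  [/\ forall i m, pint p (f i m),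
      lin_p p f
    & ser_congp p f (frob_id p h1 h2) \/ ser_congp p f (frob_sw p h1 h2)].

(* Main.v *)
Require Import Defs.
From mathcomp Require Import all_boot all_algebra.
From mathcomp Require Import mpoly ring zify.
Set Implicit Arguments.
Unset Strict Implicit.
Unset Printing Implicit Defensive.
Import GRing.Theory Num.Theory.
Local Open Scope ring_scope.

Lemma truncE n d (f : ser n) m :
  (trunc d f)@_m = if (mdeg m <= d)%N then f m else 0.
Proof.
rewrite /trunc raddf_sum /=.
under eq_bigr => m' _ do rewrite mcoeffZ mcoeffX.
case: leqP => h.
  have h' : (mdeg m < d.+1)%N by [].
  rewrite (bigD1 (BMultinom h')) //= eqxx mulr1 big1 ?addr0 // => m' ne.
  case: eqP => [e|]; last by rewrite mulr0.
  by move: ne; rewrite bmeqP /= e eqxx.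
apply: big1 => m' _; case: eqP => [e|]; last by rewrite mulr0.
have := bmdeg m'; rewrite e ltnS leqNgt h //.
Qed.

Section Vge.
Variable n : nat.
Implicit Types P Q : {mpoly rat[n]}.

Definition vge w P := forall m : 'X_{1..n}, (mdeg m < w)%N -> P@_m = 0.

Lemma vge0 P : vge 0 P. Proof. by []. Qed.
Lemma vge_le v w P : (v <= w)%N -> vge w P -> vge v P.
Proof. by move=> le h m hm; apply: h; apply: leq_trans le. Qed.
Lemma vgeZr w : vge w 0. Proof. by move=> m _; rewrite mcoeff0. Qed.
Lemma vgeD w P Q : vge w P -> vge w Q -> vge w (P + Q).
Proof. by move=> hP hQ m hm; rewrite mcoeffD hP ?hQ ?addr0. Qed.
Lemma vgeN w P : vge w P -> vge w (- P).
Proof. by move=> hP m hm; rewrite mcoeffN hP ?oppr0. Qed.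
Lemma vgeB w P Q : vge w P -> vge w Q -> vge w (P - Q).
Proof. by move=> hP hQ; apply: vgeD => //; apply: vgeN. Qed.
Lemma vgeZ w c P : vge w P -> vge w (c *: P).
Proof. by move=> hP m hm; rewrite mcoeffZ hP ?mulr0. Qed.
Lemma vge_sum w (I : Type) (r : seq I) (Pr : pred I) (F : I -> {mpoly rat[n]}) :
  (forall i, Pr i -> vge w (F i)) -> vge w (\sum_(i <- r | Pr i) F i).
Proof.
move=> h; elim/big_ind: _ => //; [exact: vgeZr | exact: vgeD].
Qed.
Lemma vgeM a b P Q : vge a P -> vge b Q -> vge (a + b) (P * Q).
Proof.
move=> hP hQ m hm; rewrite mcoeffM big1 // => k /eqP e.
have hd := congr1 (@mdeg _) e; rewrite mdegD in hd; rewrite hd in hm.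
case: (ltnP (mdeg k.1) a) => h1; first by rewrite hP ?mul0r.
rewrite hQ ?mulr0 //; rewrite -(ltn_add2l (mdeg k.1)).
by apply: (leq_trans hm); rewrite leq_add2r.
Qed.
Lemma vgeX k P : vge 1 P -> vge k (P ^+ k).
Proof.
move=> h; elim: k => [|k ih]; first exact: vge0.
by rewrite exprS -add1n; apply: vgeM.
Qed.
Lemma vge_mon m : vge (mdeg m) 'X_[m].
Proof. by move=> k hk; rewrite mcoeffX; case: eqP => // e; move: hk; rewrite e ltnn. Qed.

Definition eqv w P Q := vge w (P - Q).
Lemma eqv_refl w P : eqv w P P. Proof. by rewrite /eqv subrr; exact: vgeZr. Qed.
Lemma eqv_sym w P Q : eqv w P Q -> eqv w Q P.
Proof. by rewrite /eqv -opprB => /vgeN; rewrite opprK. Qed.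
Lemma eqv_trans w P Q R : eqv w P Q -> eqv w Q R -> eqv w P R.
Proof. move=> h1 h2; have := vgeD h1 h2; by rewrite /eqv addrA subrK. Qed.
Lemma eqvD w P P' Q Q' : eqv w P P' -> eqv w Q Q' -> eqv w (P + Q) (P' + Q').
Proof. move=> h1 h2; have := vgeD h1 h2; by rewrite /eqv opprD addrACA. Qed.
Lemma eqvN w P P' : eqv w P P' -> eqv w (- P) (- P').
Proof. by move=> h; rewrite /eqv -opprD; apply: vgeN. Qed.
Lemma eqvZ w c P P' : eqv w P P' -> eqv w (c *: P) (c *: P').
Proof. by move=> h; rewrite /eqv -scalerBr; apply: vgeZ. Qed.
Lemma eqvM w P P' Q Q' : eqv w P P' -> eqv w Q Q' -> eqv w (P * Q) (P' * Q').
Proof.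
move=> h1 h2; rewrite /eqv.
have -> : P * Q - P' * Q' = P * (Q - Q') + (P - P') * Q'.
  by rewrite mulrBr mulrBl addrA subrK.
apply: vgeD; [rewrite -(add0n w) | rewrite -(addn0 w)]; apply: vgeM => //; exact: vge0.
Qed.
Lemma eqvX w k P P' : eqv w P P' -> eqv w (P ^+ k) (P' ^+ k).
Proof.
move=> h; elim: k => [|k ih]; first exact: eqv_refl.
by rewrite !exprS; apply: eqvM.
Qed.
Lemma eqv_eq w P Q : eqv w P Q -> forall m, (mdeg m < w)%N -> P@_m = Q@_m.
Proof. by move=> h m hm; apply/eqP; rewrite -subr_eq0 -mcoeffB h. Qed.
End Vge.

Set Implicit Arguments.
Unset Strict Implicit.
Unset Printing Implicit Defensive.
Import GRing.Theory Num.Theory.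
Local Open Scope ring_scope.

Lemma vge_prodX n k (Q : 'I_n -> {mpoly rat[k]}) (m : 'X_{1..n}) :
  (forall i, vge 1 (Q i)) -> vge (mdeg m) (\prod_(i < n) Q i ^+ m i).
Proof.
move=> h; rewrite mdegE; elim/big_rec2: _ => [|i a P _ ih]; first exact: vge0.
by apply: vgeM => //; apply: vgeX.
Qed.

Lemma vge_comp n k w (P : {mpoly rat[n]}) (Q : n.-tuple {mpoly rat[k]}) :
  vge w P -> (forall i, vge 1 (tnth Q i)) -> vge w (P \mPo Q).
Proof.
move=> hP hQ; rewrite comp_mpolyE big_seq; apply: vge_sum => m hm.
case: (ltnP (mdeg m) w) => h.
  by move: hm; rewrite mcoeff_msupp hP // eqxx.
by apply: vgeZ; apply: vge_le h _; apply: vge_prodX.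
Qed.

Lemma eqv_sum n w (I : Type) (r : seq I) (Pr : pred I) (F F' : I -> {mpoly rat[n]}) :
  (forall i, Pr i -> eqv w (F i) (F' i)) ->
  eqv w (\sum_(i <- r | Pr i) F i) (\sum_(i <- r | Pr i) F' i).
Proof.
move=> h; elim/big_rec2: _ => [|i a b Pi ih]; first exact: eqv_refl.
by apply: eqvD => //; apply: h.
Qed.

Lemma eqv_comp n k w (P P' : {mpoly rat[n]}) (Q Q' : n.-tuple {mpoly rat[k]}) :
  eqv w P P' -> (forall i, eqv w (tnth Q i) (tnth Q' i)) ->
  (forall i, vge 1 (tnth Q i)) -> eqv w (P \mPo Q) (P' \mPo Q').
Proof.
move=> hP hQ h1; apply: (@eqv_trans _ _ _ (P' \mPo Q)).
  by rewrite /eqv -comp_mpolyB; apply: vge_comp.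
rewrite !comp_mpolyE; apply: eqv_sum => m _; apply: eqvZ.
elim/big_rec2: _ => [|i a b _ ih]; first exact: eqv_refl.
by apply: eqvM => //; apply: eqvX.
Qed.

Lemma comp_mpolyA n k l (P : {mpoly rat[n]}) (Q : n.-tuple {mpoly rat[k]})
  (R : k.-tuple {mpoly rat[l]}) :
  (P \mPo Q) \mPo R = P \mPo [tuple (tnth Q i) \mPo R | i < n].
Proof.
rewrite [P \mPo Q]comp_mpolyE [P \mPo _]comp_mpolyE raddf_sum; apply: eq_bigr => m _.
rewrite /= linearZ /= rmorph_prod; congr (_ *: _); apply: eq_bigr => i _.
by rewrite rmorphXn tnth_mktuple.
Qed.

Definition approx n w (f : ser n) (P : {mpoly rat[n]}) :=
  forall m, (mdeg m < w)%N -> f m = P@_m.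

Lemma approx_trunc n d (f : ser n) : approx d.+1 f (trunc d f).
Proof. by move=> m hm; rewrite truncE -ltnS hm. Qed.

Lemma approx_eqv n w (f : ser n) P P' : approx w f P -> approx w f P' -> eqv w P P'.
Proof. by move=> h1 h2 m hm; rewrite mcoeffB -h1 // -h2 // subrr. Qed.

Lemma approx_eqvr n w (f : ser n) P P' : approx w f P -> eqv w P P' -> approx w f P'.
Proof. by move=> h1 h2 m hm; rewrite h1 //; apply: (eqv_eq h2). Qed.

Lemma approx_le n v w (f : ser n) P : (v <= w)%N -> approx w f P -> approx v f P.
Proof. by move=> le h m hm; apply: h; apply: leq_trans le. Qed.

Lemma mdeg0_eq n (m : 'X_{1..n}) : (mdeg m < 1)%N -> m = 0%MM.
Proof. by rewrite ltnS leqn0 mdeg_eq0 => /eqP. Qed.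

Lemma approx_vge1 n w (f : ser n) P : (0 < w)%N -> f 0%MM = 0 -> approx w f P -> vge 1 P.
Proof. by move=> hw h0 h m /mdeg0_eq ->; rewrite -h // mdeg0. Qed.

Lemma trunc_vge1 n d (f : ser n) : f 0%MM = 0 -> vge 1 (trunc d f).
Proof. by move=> h0 m /mdeg0_eq ->; rewrite truncE h0; case: ifP. Qed.

Lemma scomp_approx n k w (f : ser n) (g : 'I_n -> ser k) P (Q : n.-tuple {mpoly rat[k]}) :
  approx w f P -> (forall i, approx w (g i) (tnth Q i)) -> (forall i, g i 0%MM = 0) ->
  approx w (scomp f g) (P \mPo Q).
Proof.
move=> hf hg h0 m hm; rewrite /scomp; apply: (@eqv_eq _ (mdeg m).+1) => //.
apply: eqv_comp.
- exact: (approx_eqv (approx_trunc (d:=mdeg m) f) (approx_le hm hf)).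
- by move=> i; rewrite tnth_mktuple; apply: (approx_eqv (approx_trunc (d:=mdeg m) (g i)) (approx_le hm (hg i))).
- by move=> i; rewrite tnth_mktuple; apply: trunc_vge1.
Qed.

Lemma smon_approx n w (m0 : 'X_{1..n}) : approx w (smon m0) 'X_[m0].
Proof. by move=> m _; rewrite /smon mcoeffX eq_sym. Qed.

Lemma svar_approx n w (i : 'I_n) : approx w (svar i) 'X_i.
Proof. exact: smon_approx. Qed.

Lemma sadd_approx n w (f g : ser n) P Q : approx w f P -> approx w g Q ->
  approx w (sadd f g) (P + Q).
Proof. by move=> h1 h2 m hm; rewrite /sadd mcoeffD h1 ?h2. Qed.

Set Implicit Arguments.
Unset Strict Implicit.
Unset Printing Implicit Defensive.
Import GRing.Theory Num.Theory.
Local Open Scope ring_scope.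

Section Pint.
Variable p : nat.
Hypothesis pp : prime p.

Lemma pintP (r : rat) :
  reflect (exists a : int, exists b : nat, ~~ (p %| b)%N /\ r * b%:R = a%:~R) (pint p r).
Proof.
apply: (iffP idP).
  move=> h; exists (numq r), `|denq r|%N; split => //.
  by rewrite numqE -absz_denq pmulrn.
case=> a [b [hb e]]; apply/negP => hd; move/negP: hb; apply; apply: (dvdn_trans hd).
have e2 : (numq r * b%:Z = a * denq r)%R.
  apply: (@intr_inj rat); rewrite !intrM numqE -e /=.
  by rewrite -mulrA [X in _ * X = _]mulrC mulrA.
have e3 := congr1 absz e2; rewrite !abszM /= in e3.
rewrite -(@Gauss_dvdr _ `|numq r|) ?e3 ?dvdn_mull //.
by rewrite coprime_sym coprime_num_den.
Qed.

Lemma pint_int (a : int) : pint p a%:~R.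
Proof. by apply/pintP; exists a, 1%N; rewrite mulr1 dvdn1; split => //; case: (p) pp => [|[]]. Qed.

Lemma pint_nat (a : nat) : pint p a%:R.
Proof. by have := pint_int a. Qed.

Lemma pint0 : pint p 0. Proof. exact: (pint_nat 0). Qed.
Lemma pint1 : pint p 1. Proof. exact: (pint_nat 1). Qed.

Lemma pintD r s : pint p r -> pint p s -> pint p (r + s).
Proof.
move=> /pintP [a1 [b1 [h1 e1]]] /pintP [a2 [b2 [h2 e2]]].
apply/pintP; exists (a1 * b2%:Z + a2 * b1%:Z), (b1 * b2)%N; split.
  by rewrite Euclid_dvdM // negb_or h1 h2.
rewrite natrM mulrDl intrD !intrM -e1 -e2 /=.
by ring.
Qed.

Lemma pintM r s : pint p r -> pint p s -> pint p (r * s).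
Proof.
move=> /pintP [a1 [b1 [h1 e1]]] /pintP [a2 [b2 [h2 e2]]].
apply/pintP; exists (a1 * a2), (b1 * b2)%N; split.
  by rewrite Euclid_dvdM // negb_or h1 h2.
rewrite natrM intrM -e1 -e2.
by rewrite -!mulrA; congr (_ * _); rewrite mulrC -mulrA; congr (_ * _); rewrite mulrC.
Qed.

Lemma pintN r : pint p r -> pint p (- r).
Proof. by move=> h; rewrite -mulN1r; apply: pintM => //; apply: (pint_int (-1)). Qed.

Lemma pintB r s : pint p r -> pint p s -> pint p (r - s).
Proof. by move=> h1 h2; apply: pintD => //; apply: pintN. Qed.

Lemma pint_sum (I : Type) (r : seq I) (Pr : pred I) (F : I -> rat) :
  (forall i, Pr i -> pint p (F i)) -> pint p (\sum_(i <- r | Pr i) F i).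
Proof. by move=> h; elim/big_ind: _ => //; [exact: pint0 | exact: pintD]. Qed.

Lemma pintX r k : pint p r -> pint p (r ^+ k).
Proof. by move=> h; elim: k => [|k ih]; [exact: pint1 | rewrite exprS; apply: pintM]. Qed.

Lemma pint_cong r s : congp p r s -> pint p s -> pint p r.
Proof.
move=> h hs; have -> : r = s + p%:R * ((r - s) / p%:R).
  have hp : (p%:R : rat) != 0 by rewrite pnatr_eq0; case: (p) pp.
  by rewrite mulrC divfK // addrC subrK.
by apply: pintD => //; apply: pintM => //; apply: pint_nat.
Qed.

Definition ipo n (P : {mpoly rat[n]}) := forall m, pint p P@_m.

Variable n : nat.
Implicit Types P Q : {mpoly rat[n]}.

Lemma ipo0 : ipo (0 : {mpoly rat[n]}). Proof. by move=> m; rewrite mcoeff0 pint0. Qed.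
Lemma ipoD P Q : ipo P -> ipo Q -> ipo (P + Q).
Proof. by move=> h1 h2 m; rewrite mcoeffD pintD. Qed.
Lemma ipoN P : ipo P -> ipo (- P).
Proof. by move=> h1 m; rewrite mcoeffN pintN. Qed.
Lemma ipoB P Q : ipo P -> ipo Q -> ipo (P - Q).
Proof. by move=> h1 h2; apply: ipoD => //; apply: ipoN. Qed.
Lemma ipoZ c P : pint p c -> ipo P -> ipo (c *: P).
Proof. by move=> h1 h2 m; rewrite mcoeffZ pintM. Qed.
Lemma ipoM P Q : ipo P -> ipo Q -> ipo (P * Q).
Proof. by move=> h1 h2 m; rewrite mcoeffM; apply: pint_sum => k _; apply: pintM. Qed.
Lemma ipo1 : ipo (1 : {mpoly rat[n]}).
Proof. by move=> m; rewrite mcoeff1 pint_nat. Qed.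
Lemma ipoX P k : ipo P -> ipo (P ^+ k).
Proof. by move=> h; elim: k => [|k ih]; [exact: ipo1 | rewrite exprS; apply: ipoM]. Qed.
Lemma ipo_sum (I : Type) (r : seq I) (Pr : pred I) (F : I -> {mpoly rat[n]}) :
  (forall i, Pr i -> ipo (F i)) -> ipo (\sum_(i <- r | Pr i) F i).
Proof. by move=> h; elim/big_ind: _ => //; [exact: ipo0 | exact: ipoD]. Qed.
Lemma ipo_mon (m : 'X_{1..n}) : ipo ('X_[m] : {mpoly rat[n]}).
Proof. by move=> k; rewrite mcoeffX pint_nat. Qed.

Lemma pow_step k (X Y : {mpoly rat[n]}) : (0 < k)%N -> ipo X -> ipo Y ->
  exists Z, ipo Z /\
   (X + ((p ^ k)%:R : rat) *: Y) ^+ p = X ^+ p + ((p ^ k.+1)%:R : rat) *: Z.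
Proof.
move=> k0 hX hY.
exists (\sum_(i < p) ((('C(p, i.+1) * p ^ (k * i.+1)) %/ p ^ k.+1)%:R : rat) *:
          (X ^+ (p - i.+1) * Y ^+ i.+1)); split.
  apply: ipo_sum => i _; apply: ipoZ; first exact: pint_nat.
  by apply: ipoM; apply: ipoX.
rewrite exprDn big_ord_recl /= subn0 expr0 mulr1 bin0 mulr1n; congr (_ + _).
rewrite scaler_sumr; apply: eq_bigr => i _.
rewrite /bump /= add1n exprZn.
rewrite -scalerAr -scaler_nat !scalerA -natrX -!natrM; congr (_ *: _); congr (_%:R).
rewrite -expnM [RHS]mulnC divnK //.
case: i => [[|i] hi] /=.
  by rewrite bin1 muln1 expnS.
apply: dvdn_mull; rewrite dvdn_Pexp2l ?prime_gt1 //.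
by rewrite mulnS -addn1 leq_add2l muln_gt0 k0.
Qed.

End Pint.

Set Implicit Arguments.
Unset Strict Implicit.
Unset Printing Implicit Defensive.
Import GRing.Theory Num.Theory.
Local Open Scope ring_scope.

Definition trb n d (P : {mpoly rat[n]}) : {mpoly rat[n]} :=
  \sum_(m : 'X_{1..n < d}) P@_m *: 'X_[m].

Lemma trbE n d (P : {mpoly rat[n]}) m :
  (trb d P)@_m = if (mdeg m < d)%N then P@_m else 0.
Proof.
rewrite /trb raddf_sum /=.
under eq_bigr => m' _ do rewrite mcoeffZ mcoeffX.
case: ltnP => h.
  rewrite (bigD1 (BMultinom h)) //= eqxx mulr1 big1 ?addr0 // => m' ne.
  case: eqP => [e|]; last by rewrite mulr0.
  by move: ne; rewrite bmeqP /= e eqxx.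
apply: big1 => m' _; case: eqP => [e|]; last by rewrite mulr0.
have := bmdeg m'; rewrite e ltnNge h //.
Qed.

Section Cong.
Variable p : nat.
Hypothesis pp : prime p.

Lemma p_neq0 : (p%:R : rat) != 0.
Proof. by rewrite pnatr_eq0; case: (p) pp. Qed.

Lemma powe n e (A B C : {mpoly rat[n]}) : ipo p B -> ipo p C ->
  A = B + ((p ^ 1)%:R : rat) *: C ->
  exists D, ipo p D /\ A ^+ (p ^ e) = B ^+ (p ^ e) + ((p ^ e.+1)%:R : rat) *: D.
Proof.
move=> hB hC ->; elim: e => [|e [D [hD e1]]].
  by exists C; rewrite expn0 !expr1.
have [Z [hZ e2]] := pow_step pp (k := e.+1) (ltn0Sn e) (ipoX pp (p ^ e) hB) hD.
by exists Z; split => //; rewrite (expnSr p e) !exprM e1 e2.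
Qed.

Lemma term_cong (G F : {mpoly rat[2]}) j e m :
  (j <= e)%N -> (0 < e)%N -> vge 1 G -> vge 1 F -> ipo p F ->
  (forall m', (mdeg m' < mdeg m)%N -> congp p G@_m' F@_m') ->
  pint p ((((p%:R : rat) ^- j) *: (F ^+ (p ^ e) - G ^+ (p ^ e)))@_m / p%:R).
Proof.
move=> hje he0 hG hF iF hc.
set d := mdeg m.
set A := trb d G; set B := trb d F.
have trv (P : {mpoly rat[2]}) : vge 1 P ->
   (P ^+ (p ^ e))@_m = ((trb d P) ^+ (p ^ e))@_m.
  move=> h1; apply: (@eqv_eq _ d.+1) => //.
  rewrite /eqv subrXX -[d.+1]addn1; apply: vgeM.
    by move=> m' hm'; rewrite mcoeffB trbE hm' subrr.
  apply: vge_sum => i _; apply: (@vge_le _ _ (p ^ e).-1).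
    rewrite -subn1 subn_gt0; apply: (leq_trans (prime_gt1 pp)); by rewrite -{1}(expn1 p) leq_pexp2l // prime_gt0.
  have hi : (i <= (p ^ e).-1)%N.
    by rewrite -ltnS prednK ?ltn_ord // expn_gt0 prime_gt0.
  rewrite -{1}(subnK hi).
  apply: vgeM; apply: vgeX => // m' hm'; rewrite trbE; case: ifP => _ //; exact: h1.
have pe0 : (p ^ e)%:R != 0 :> rat by rewrite natrX expf_neq0 // p_neq0.
have hC : ipo p ((p%:R : rat)^-1 *: (A - B)).
  move=> m'; rewrite mcoeffZ mcoeffB !trbE; case: ifP => h.
    by rewrite mulrC; apply: hc.
  by rewrite subrr mulr0; apply: pint0.
have hB : ipo p B by move=> m'; rewrite trbE; case: ifP => _ //; exact: pint0.
have eAB : A = B + ((p ^ 1)%:R : rat) *: ((p%:R : rat)^-1 *: (A - B)).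
  by rewrite expn1 scalerA mulfV ?p_neq0 // scale1r addrC subrK.
have [D [hD eD]] := powe e hB hC eAB.
rewrite mcoeffZ mcoeffB (trv F hF) (trv G hG) -/A -/B eD mcoeffD mcoeffZ.
rewrite opprD addrA subrr add0r.
have -> : (p%:R : rat) ^- j * - ((p ^ e.+1)%:R * D@_m) / p%:R = - ((p ^ (e - j))%:R * D@_m).
  rewrite -(subnK hje) addnK !natrX exprSr exprD.
  field; rewrite p_neq0 expf_neq0 // p_neq0 //.
by apply: pintN => //; apply: pintM => //; apply: pint_nat.
Qed.
End Cong.

Set Implicit Arguments.
Unset Strict Implicit.
Unset Printing Implicit Defensive.
Import GRing.Theory Num.Theory.
Local Open Scope ring_scope.

Section Main.
Variable p : nat.
Hypothesis pp : prime p.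

Lemma main_ind w (Ga Ph R : 'I_2 -> {mpoly rat[2]}) :
  (forall i, eqv w (Ga i - Ph i) (p%:R *: 'X_i + R i)) ->
  (forall i m, (mdeg m < w)%N ->
     (forall i' m', (mdeg m' < mdeg m)%N -> congp p (Ga i')@_m' (Ph i')@_m') ->
     pint p ((R i)@_m / p%:R)) ->
  forall i m, (mdeg m < w)%N -> congp p (Ga i)@_m (Ph i)@_m.
Proof.
move=> hE hR.
suff: forall d i m, (mdeg m <= d)%N -> (mdeg m < w)%N -> congp p (Ga i)@_m (Ph i)@_m.
  by move=> h i m; apply: h.
elim=> [|d ih] i m hd hw; rewrite /congp -mcoeffB (eqv_eq (hE i)) // mcoeffD mcoeffZ mulrDl.
- apply: (pintD pp); first by rewrite mulrC mulKf ?p_neq0 // mcoeffX (pint_nat pp).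
  by apply: hR => // i' m'; rewrite ltnNge (leq_trans hd).
- apply: (pintD pp); first by rewrite mulrC mulKf ?p_neq0 // mcoeffX (pint_nat pp).
  apply: hR => // i' m' h'; apply: ih; last by apply: ltn_trans hw.
  by rewrite -ltnS (leq_trans h').
Qed.

Variables h1 h2 : nat.
Local Notation h := (h1 + h2)%N.

Definition Tsum n N (a b : 'I_2) hi (Q : 'I_2 -> {mpoly rat[n]}) : {mpoly rat[n]} :=
  \sum_(1 <= k < N) ((p%:R : rat) ^- (2 * k)) *: Q a ^+ (p ^ (k * h))
  + \sum_(0 <= k < N) ((p%:R : rat) ^- (2 * k).+1) *: Q b ^+ (p ^ (hi + k * h)).

Lemma Lpart_comp n N a b hi (Q : 'I_2 -> {mpoly rat[n]}) :
  Lpart p h1 h2 N a b hi \mPo [tuple Q i | i < 2] = Q a + Tsum N a b hi Q.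
Proof.
rewrite /Lpart /Tsum !comp_mpolyD !raddf_sum /= comp_mpolyXU -tnth_nth tnth_mktuple addrA.
congr (_ + _ + _); apply: eq_bigr => k _;
by rewrite comp_mpolyZ rmorphXn /= comp_mpolyXU -tnth_nth tnth_mktuple.
Qed.

Lemma Lpart_X N a b hi :
  Lpart p h1 h2 N a b hi = 'X_a + Tsum N a b hi (fun i => 'X_i).
Proof. by rewrite -Lpart_comp comp_mpoly_id. Qed.

Lemma Tsum_R N a b hi (Ga Ph : 'I_2 -> {mpoly rat[2]}) m :
  (0 < h1)%N -> (0 < h2)%N -> (0 < hi)%N ->
  (forall i, vge 1 (Ga i)) -> (forall i, vge 1 (Ph i)) -> (forall i, ipo p (Ph i)) ->
  (forall i' m', (mdeg m' < mdeg m)%N -> congp p (Ga i')@_m' (Ph i')@_m') ->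
  pint p ((Tsum N a b hi Ph - Tsum N a b hi Ga)@_m / p%:R).
Proof.
move=> p1 p2 p3 hG hP iP hc.
rewrite /Tsum opprD addrACA -!sumrB mcoeffD mulrDl; apply: (pintD pp).
  rewrite big_nat_cond raddf_sum mulr_suml; apply: (pint_sum pp) => k /andP [/andP [hk1 hk2] _].
  rewrite -scalerBr; apply: (term_cong pp) => //; [nia | nia | by move=> *; apply: hc].
rewrite big_nat_cond raddf_sum mulr_suml; apply: (pint_sum pp) => k /andP [/andP [hk1 hk2] _].
rewrite -scalerBr; apply: (term_cong pp) => //; [nia | nia | by move=> *; apply: hc].
Qed.

Lemma pinvS k : (p%:R : rat) * (p%:R ^- k.+1) = p%:R ^- k.
Proof. by rewrite exprS invfM mulrA mulfV ?mul1r ?p_neq0. Qed.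

Lemma Tsum_frob N (a b : 'I_2) hi hj : (hj + hi = h)%N -> a != b ->
  let Ph := fun i : 'I_2 => if i == a then 'X_b ^+ (p ^ hi) else 'X_a ^+ (p ^ hj) in
  p%:R *: Tsum N.+1 a b hi (fun i => 'X_i) +
    ((p%:R : rat) ^- (2 * N).+1) *: ('X_a : {mpoly rat[2]}) ^+ (p ^ (N.+1 * h))
  = 'X_b ^+ (p ^ hi) + Tsum N.+1 a b hi Ph.
Proof.
move=> hh ab Ph.
have Pa : Ph a = 'X_b ^+ (p ^ hi) by rewrite /Ph eqxx.
have Pb : Ph b = 'X_a ^+ (p ^ hj) by rewrite /Ph eq_sym (negbTE ab).
rewrite /Tsum Pa Pb scalerDr !scaler_sumr.
rewrite !big_add1 /= big_nat_recl // [X in _ = _ + (_ + X)]big_nat_recr //=.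
have e3 : (p%:R : rat) *: ((p%:R ^- (2 * 0).+1) *: ('X_b : {mpoly rat[2]}) ^+ (p ^ (hi + 0 * h))) = 'X_b ^+ (p ^ hi).
  by rewrite scalerA muln0 expr1 mulfV ?p_neq0 // scale1r mul0n addn0.
have e1 : \sum_(0 <= i < N) (p%:R : rat) *: (p%:R ^- (2 * i.+1) *: ('X_a : {mpoly rat[2]}) ^+ (p ^ (i.+1 * h)))
   = \sum_(0 <= i < N) (p%:R ^- (2 * i).+1 *: ('X_a ^+ (p ^ hj)) ^+ (p ^ (hi + i * h))).
  apply: eq_bigr => k _; rewrite scalerA -exprM -expnD.
  have -> : (2 * k.+1 = (2 * k).+1.+1)%N by rewrite mulnS.
  by rewrite pinvS mulSn -hh addnA.
have e2 : \sum_(0 <= i < N) (p%:R : rat) *: (p%:R ^- (2 * i.+1).+1 *: ('X_b : {mpoly rat[2]}) ^+ (p ^ (hi + i.+1 * h)))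
   = \sum_(0 <= i < N) (p%:R ^- (2 * i.+1) *: ('X_b ^+ (p ^ hi)) ^+ (p ^ (i.+1 * h))).
  by apply: eq_bigr => k _; rewrite scalerA -exprM -expnD pinvS.
have e4 : ((p%:R : rat) ^- (2 * N).+1) *: ('X_a : {mpoly rat[2]}) ^+ (p ^ (N.+1 * h)) =
   p%:R ^- (2 * N).+1 *: ('X_a ^+ (p ^ hj)) ^+ (p ^ (hi + N * h)).
  by rewrite -exprM -expnD mulSn -hh addnA.
rewrite e1 e2 e3 e4.
by ring.
Qed.

End Main.

Set Implicit Arguments.
Unset Strict Implicit.
Unset Printing Implicit Defensive.
Import GRing.Theory Num.Theory.
Local Open Scope ring_scope.

Lemma vge_Xq n (i : 'I_n) q v : (v <= q)%N -> vge v (('X_i : {mpoly rat[n]}) ^+ q).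
Proof. by move=> le; rewrite mpolyXn; apply: (vge_le _ (@vge_mon _ (U_(i) *+ q)%MM)); rewrite mdegMn mdeg1 mul1n. Qed.

Lemma vge1_X n (i : 'I_n) : vge 1 ('X_i : {mpoly rat[n]}).
Proof. by have := vge_Xq i (leqnn 1); rewrite expr1. Qed.

Lemma approx_zero n w (f : ser n) P : approx w f P -> (0 < w)%N -> vge 1 P -> f 0%MM = 0.
Proof. by move=> h w0 v; rewrite h ?mdeg0 // v // mdeg0. Qed.

Section Group.
Variables (p h1 h2 : nat).
Hypothesis pp : prime p.
Hypothesis h10 : (0 < h1)%N.
Hypothesis h20 : (0 < h2)%N.
Local Notation h := (h1 + h2)%N.

Lemma p_gt1 : (1 < p)%N. Proof. exact: prime_gt1. Qed.

Lemma big_exp k hi : (k < p ^ (hi + k * h))%N.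
Proof.
apply: (leq_trans (ltn_expl k p_gt1)); rewrite leq_pexp2l ?prime_gt0 //; nia.
Qed.

Lemma Lpart_ext N N' (a b : 'I_2) hi m : (mdeg m < N)%N -> (N <= N')%N ->
  (Lpart p h1 h2 N a b hi)@_m = (Lpart p h1 h2 N' a b hi)@_m.
Proof.
move=> hm hN; rewrite /Lpart.
have N1 : (1 <= N)%N by apply: leq_ltn_trans hm.
rewrite [X in _ = (_ + X + _)@__](big_cat_nat N1 hN) /=.
rewrite [X in _ = (_ + X)@__](big_cat_nat (leq0n N) hN) //=.
rewrite !mcoeffD.
have z1 : (\sum_(N <= i < N') ((p%:R : rat) ^- (2 * i)) *: ('X_a : {mpoly rat[2]}) ^+ (p ^ (i * h)))@_m = 0.
  suff: vge (mdeg m).+1 (\sum_(N <= i < N') ((p%:R : rat) ^- (2 * i)) *: ('X_a : {mpoly rat[2]}) ^+ (p ^ (i * h))).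
    by move=> /(_ m (ltnSn _)).
  rewrite big_nat_cond; apply: vge_sum => i /andP [/andP [hi1 hi2] _]; apply: vgeZ; apply: vge_Xq.
  apply: (leq_trans hm); apply: (leq_trans hi1); apply: ltnW.
  by have := big_exp i 0.
have z2 : (\sum_(N <= i < N') ((p%:R : rat) ^- (2 * i).+1) *: ('X_b : {mpoly rat[2]}) ^+ (p ^ (hi + i * h)))@_m = 0.
  suff: vge (mdeg m).+1 (\sum_(N <= i < N') ((p%:R : rat) ^- (2 * i).+1) *: ('X_b : {mpoly rat[2]}) ^+ (p ^ (hi + i * h))).
    by move=> /(_ m (ltnSn _)).
  rewrite big_nat_cond; apply: vge_sum => i /andP [/andP [hi1 hi2] _]; apply: vgeZ; apply: vge_Xq.
  apply: (leq_trans hm); apply: (leq_trans hi1); apply: ltnW.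
  exact: big_exp.
rewrite z1 z2; ring.
Qed.

Lemma two_le_pexp e : (0 < e)%N -> (2 <= p ^ e)%N.
Proof. by move=> e0; apply: (leq_trans p_gt1); rewrite -{1}(expn1 p) leq_pexp2l // prime_gt0. Qed.

Lemma Tsum_X_vge2 N a b hi : (0 < hi)%N ->
  vge 2 (Tsum p h1 h2 N a b hi (fun i => ('X_i : {mpoly rat[2]}))).
Proof.
move=> hi0; rewrite /Tsum; apply: vgeD; rewrite big_nat_cond; apply: vge_sum => k /andP [/andP [k1 k2] _];
apply: vgeZ; apply: vge_Xq; apply: two_le_pexp; nia.
Qed.

Lemma Lpart_eqv2 N a b hi : (0 < hi)%N -> eqv 2 (Lpart p h1 h2 N a b hi) 'X_a.
Proof. by move=> hi0; rewrite /eqv Lpart_X addrC addKr; apply: Tsum_X_vge2. Qed.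

Lemma Lpart_vge1 N a b hi : (0 < hi)%N -> vge 1 (Lpart p h1 h2 N a b hi).
Proof.
move=> hi0; have := vgeD (vge_le (ltnW (ltnSn 1)) (Lpart_eqv2 N a b hi0)) (vge1_X a).
by rewrite subrK.
Qed.

Definition Lp w (i : 'I_2) : {mpoly rat[2]} :=
  if i == i1 then Lpart p h1 h2 w i1 i2 h1 else Lpart p h1 h2 w i2 i1 h2.

Lemma I2cases (i : 'I_2) : i = i1 \/ i = i2.
Proof. by case: i => [[|[|k]] hk]; [left; apply: val_inj | right; apply: val_inj | ]. Qed.

Lemma Lser_approx w i : approx w (Lser p h1 h2 i) (Lp w i).
Proof. by move=> m hm; rewrite /Lser /Lp; case: (i == i1); apply: Lpart_ext. Qed.

Lemma Lp_eqv2 w i : eqv 2 (Lp w i) 'X_i.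
Proof. by case: (I2cases i) => ->; rewrite /Lp /=; apply: Lpart_eqv2. Qed.

Lemma Lp_vge1 w i : vge 1 (Lp w i).
Proof. by case: (I2cases i) => ->; rewrite /Lp /=; apply: Lpart_vge1. Qed.

Lemma svar0 n (i : 'I_n) : svar i 0%MM = 0.
Proof. by rewrite /svar /smon; case: eqP => // e; have := mdeg1 i; rewrite -e mdeg0. Qed.

Fixpoint Mp (Fq : 'I_2 -> {mpoly rat[4]}) (k : nat) : 'I_2 -> {mpoly rat[2]} :=
  match k with
  | 0 => fun _ => 0
  | k'.+1 =>
    if k' is 0 then fun i => 'X_i
    else fun i => Fq i \mPo [tuple match split t with
                                  | inl a => 'X_a
                                  | inr b => Mp Fq k' b
                                  end | t < 2 + 2]
  end.

Lemma Mp_SS Fq k : Mp Fq k.+2 = fun i => Fq i \mPo [tuple match split t with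
                                  | inl a => 'X_a
                                  | inr b => Mp Fq k.+1 b
                                  end | t < 2 + 2].
Proof. by []. Qed.

Lemma mulF_SS F k : mulF F k.+2 = fun i => scomp (F i) (fun t : 'I_(2 + 2) =>
           match split t with
           | inl a => svar a
           | inr b => mulF F k.+1 b
           end).
Proof. by []. Qed.

Variable G : 'I_2 -> ser 2.
Hypothesis HG : is_Linv p h1 h2 G.
Variable w : nat.
Hypothesis w0 : (0 < w)%N.

Lemma G0 i : G i 0%MM = 0. Proof. by case: HG. Qed.

Definition Gp i := trunc w (G i).
Lemma apG i : approx w (G i) (Gp i).
Proof. exact: approx_le (leqnSn w) (approx_trunc _). Qed.
Lemma vgeGp i : vge 1 (Gp i). Proof. exact: trunc_vge1 (G0 i). Qed.

Lemma LpG i : eqv w (Lp w i \mPo [tuple Gp j | j < 2]) 'X_i.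
Proof.
have h1' : approx w (scomp (Lser p h1 h2 i) G) (Lp w i \mPo [tuple Gp j | j < 2]).
  apply: scomp_approx; first exact: Lser_approx.
    by move=> j; rewrite tnth_mktuple; apply: apG.
  exact: G0.
case: HG => _ e _; rewrite e in h1'.
have := (approx_eqv h1' (@svar_approx 2 w i)). by [].
Qed.

Lemma Lser0 i : Lser p h1 h2 i 0%MM = 0.
Proof. exact: approx_zero (@Lser_approx 1 i) (ltn0Sn 0) (@Lp_vge1 1 i). Qed.

Definition SL j : {mpoly rat[4]} := Lp w j \mPo [tuple 'X_(lshift 2 t) | t < 2].
Definition SR j : {mpoly rat[4]} := Lp w j \mPo [tuple 'X_(rshift 2 t) | t < 2].
Definition S4 j := SL j + SR j.

Lemma vgeS4 j : vge 1 (S4 j).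
Proof.
by apply: vgeD; apply: vge_comp; try exact: (@Lp_vge1 w j); move=> t; rewrite tnth_mktuple; exact: vge1_X.
Qed.

Lemma apS4 j : approx w (sadd (scomp (Lser p h1 h2 j) (fun t => svar (lshift 2 t)))
                               (scomp (Lser p h1 h2 j) (fun t => svar (rshift 2 t)))) (S4 j).
Proof.
apply: sadd_approx; apply: scomp_approx; try exact: (@Lser_approx w j); move=> t;
rewrite ?tnth_mktuple ?svar0 //; exact: svar_approx.
Qed.

Definition Fp i := Gp i \mPo [tuple S4 j | j < 2].

Lemma vgeFp i : vge 1 (Fp i).
Proof. by apply: vge_comp; [exact: vgeGp | move=> j; rewrite tnth_mktuple; exact: vgeS4]. Qed.

Lemma apFp i : approx w (FLT p h1 h2 G i) (Fp i).
Proof.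
apply: scomp_approx; first exact: apG.
  by move=> j; rewrite tnth_mktuple; apply: apS4.
by move=> j; apply: approx_zero (apS4 j) w0 (vgeS4 j).
Qed.

Lemma Mp_approx k : (0 < k)%N -> forall i,
  approx w (mulF (FLT p h1 h2 G) k i) (Mp Fp k i) /\ vge 1 (Mp Fp k i).
Proof.
elim: k => [//|[|k] ih] _ i.
  by split; [exact: svar_approx | exact: vge1_X].
have ih' := ih (ltn0Sn k).
rewrite mulF_SS Mp_SS; split.
  apply: scomp_approx; first exact: apFp.
    move=> t; rewrite tnth_mktuple; case: split => [a|b]; first exact: svar_approx.
    exact: (ih' b).1.
  move=> t; case: split => [a|b]; first exact: svar0.
  exact: approx_zero (ih' b).1 w0 (ih' b).2.
apply: vge_comp; first exact: vgeFp.
move=> t; rewrite tnth_mktuple; case: split => [a|b]; first exact: vge1_X.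
exact: (ih' b).2.
Qed.

Lemma vgeMp k i : (0 < k)%N -> vge 1 (Mp Fp k i).
Proof. by move=> k0; case: (Mp_approx k0 i). Qed.

Lemma tuple_X2 n : [tuple ('X_t : {mpoly rat[n]}) | t < n] = [tuple 'X_t | t < n].
Proof. by []. Qed.

Lemma key k i : (0 < k)%N ->
  eqv w (Lp w i \mPo [tuple Mp Fp k j | j < 2]) (k%:R *: Lp w i).
Proof.
elim: k i => [//|[|k] ih] i _.
  by rewrite comp_mpoly_id scale1r; apply: eqv_refl.
rewrite Mp_SS.
set V := [tuple match split t with | inl a => 'X_a | inr b => Mp Fp k.+1 b end | t < 2 + 2].
have vV : forall t, vge 1 (tnth V t).
  by move=> t; rewrite tnth_mktuple; case: split => [a|b]; [exact: vge1_X | exact: vgeMp].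
have e1 : Lp w i \mPo [tuple Fp j \mPo V | j < 2] = (Lp w i \mPo [tuple Fp j | j < 2]) \mPo V.
  by rewrite comp_mpolyA; congr (_ \mPo _); apply: eq_mktuple => j; rewrite tnth_mktuple.
have e2 : Lp w i \mPo [tuple Fp j | j < 2] = (Lp w i \mPo [tuple Gp j | j < 2]) \mPo [tuple S4 j | j < 2].
  by rewrite comp_mpolyA; congr (_ \mPo _); apply: eq_mktuple => j; rewrite tnth_mktuple.
have e3 : eqv w (Lp w i \mPo [tuple Fp j | j < 2]) (S4 i).
  rewrite e2; have -> : S4 i = 'X_i \mPo [tuple S4 j | j < 2].
    by rewrite comp_mpolyXU -tnth_nth tnth_mktuple.
  apply: eqv_comp; first exact: LpG.
    by move=> j; apply: eqv_refl.
  by move=> j; rewrite tnth_mktuple; apply: vgeS4.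
have e4 : eqv w (Lp w i \mPo [tuple Fp j \mPo V | j < 2]) (S4 i \mPo V).
  rewrite e1; apply: eqv_comp => //; first by move=> t; apply: eqv_refl.
have eL : SL i \mPo V = Lp w i.
  rewrite /SL comp_mpolyA -[RHS]comp_mpoly_id; congr (_ \mPo _); apply: eq_mktuple => j.
  rewrite tnth_mktuple comp_mpolyXU -tnth_nth tnth_mktuple.
  by rewrite (unsplitK (inl _ j)).
have eR : SR i \mPo V = Lp w i \mPo [tuple Mp Fp k.+1 j | j < 2].
  rewrite /SR comp_mpolyA; congr (_ \mPo _); apply: eq_mktuple => j.
  rewrite tnth_mktuple comp_mpolyXU -tnth_nth tnth_mktuple.
  by rewrite (unsplitK (inr _ j)).
apply: eqv_trans e4 _; rewrite /S4 comp_mpolyD eL eR.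
have -> : (k.+2%:R : rat) *: Lp w i = Lp w i + k.+1%:R *: Lp w i.
  by rewrite -[k.+2]add1n natrD scalerDl scale1r.
by apply: eqvD; [apply: eqv_refl | apply: ih].
Qed.

End Group.

Set Implicit Arguments.
Unset Strict Implicit.
Unset Printing Implicit Defensive.
Import GRing.Theory Num.Theory.
Local Open Scope ring_scope.

Lemma hyp1 w (Ga Pha TG TPh pX pTX ex : {mpoly rat[2]}) :
  eqv w (Ga + TG) (pX + pTX) -> pTX + ex = Pha + TPh -> vge w ex ->
  eqv w (Ga - Pha) (pX + (TPh - TG)).
Proof.
move=> h1 h2 h3; rewrite /eqv.
have eT : TPh = pTX + ex - Pha by rewrite h2 addrC addKr.
have -> : Ga - Pha - (pX + (TPh - TG)) = (Ga + TG - (pX + pTX)) - ex.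
  by rewrite eT; ring.
by apply: vgeB.
Qed.

Lemma Tsum_ext p h1 h2 n N a b hi (Q Q' : 'I_2 -> {mpoly rat[n]}) :
  Q a = Q' a -> Q b = Q' b -> Tsum p h1 h2 N a b hi Q = Tsum p h1 h2 N a b hi Q'.
Proof. by move=> ea eb; rewrite /Tsum ea eb. Qed.

Lemma frob_pint p h1 h2 i m : prime p -> pint p (frob_sw p h1 h2 i m).
Proof. by move=> pp; rewrite /frob_sw /smon; case: ifP => _; apply: (pint_nat pp). Qed.

Theorem proposition3p6 (p h1 h2 : nat) (G : 'I_2 -> ser 2) :
  prime p -> (0 < h1)%N -> (0 < h2)%N -> coprime h1 h2 ->
  is_Linv p h1 h2 G ->
  let pF := mulF (FLT p h1 h2 G) p in
  [/\ lin_p p pF,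
      ser_congp p pF (frob_sw p h1 h2)
    & CLT p h1 h2 pF].
Proof.
move=> pp h10 h20 _ HG pF.
pose Ga w := Mp (Fp p h1 h2 G w) p.
have p0 : (0 < p)%N := prime_gt0 pp.
have A1 : forall w, (0 < w)%N -> forall i, approx w (pF i) (Ga w i).
  by move=> w w0 i; exact: (Mp_approx pp h10 h20 HG w0 p0 i).1.
have A2 : forall w, (0 < w)%N -> forall i, vge 1 (Ga w i).
  by move=> w w0 i; exact: (Mp_approx pp h10 h20 HG w0 p0 i).2.
have A3 : forall w, (0 < w)%N -> forall i,
    eqv w (Lp p h1 h2 w i \mPo [tuple Ga w j | j < 2]) (p%:R *: Lp p h1 h2 w i).
  by move=> w w0 i; exact: (key pp h10 h20 HG w0 i p0).
have HL : lin_p p pF.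
  move=> i m hm; have w0 : (0 < 2)%N by [].
  rewrite (A1 2 w0 i m hm).
  have e1 : eqv 2 (Ga 2 i) (p%:R *: 'X_i).
    have -> : Ga 2 i = 'X_i \mPo [tuple Ga 2 j | j < 2].
      by rewrite comp_mpolyXU -tnth_nth tnth_mktuple.
    apply: (@eqv_trans _ _ _ (Lp p h1 h2 2 i \mPo [tuple Ga 2 j | j < 2])).
      apply: eqv_comp; first exact: eqv_sym (Lp_eqv2 pp h10 h20 2 i).
        by move=> j; apply: eqv_refl.
      by move=> j; rewrite tnth_mktuple; apply: A2.
    apply: eqv_trans (A3 2 w0 i) _; apply: eqvZ; exact: Lp_eqv2.
  by rewrite (eqv_eq e1 hm) mcoeffZ /svar /smon mcoeffX eq_sym.
have HC : ser_congp p pF (frob_sw p h1 h2).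
  move=> i m; set N := mdeg m; have w0 : (0 < N.+1)%N by [].
  pose Ph := fun j : 'I_2 => if j == i1 then ('X_i2 : {mpoly rat[2]}) ^+ (p ^ h1)
                              else 'X_i1 ^+ (p ^ h2).
  pose R := fun j : 'I_2 => if j == i1
     then Tsum p h1 h2 N.+1 i1 i2 h1 Ph - Tsum p h1 h2 N.+1 i1 i2 h1 (Ga N.+1)
     else Tsum p h1 h2 N.+1 i2 i1 h2 Ph - Tsum p h1 h2 N.+1 i2 i1 h2 (Ga N.+1).
  have vPh : forall j, vge 1 (Ph j).
    by move=> j; rewrite /Ph; case: ifP => _; apply: vge_Xq; rewrite expn_gt0 p0.
  have iPh : forall j, ipo p (Ph j).
    by move=> j; rewrite /Ph; case: ifP => _; apply: (ipoX pp); apply: ipo_mon.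
  have vex : vge N.+1 (('X_i1 : {mpoly rat[2]}) ^+ (p ^ (N.+1 * (h1 + h2)))).
    by apply: vge_Xq; have := big_exp pp h10 h20 N.+1 0; rewrite add0n => /ltnW.
  have vex2 : vge N.+1 (('X_i2 : {mpoly rat[2]}) ^+ (p ^ (N.+1 * (h1 + h2)))).
    by apply: vge_Xq; have := big_exp pp h10 h20 N.+1 0; rewrite add0n => /ltnW.
  have HM : congp p (Ga N.+1 i)@_m (Ph i)@_m.
    apply: (main_ind pp (R := R)); last exact: ltnSn.
      move=> j; case: (I2cases j) => -> /=; rewrite /Ph /R /=.
        have eF := (Tsum_frob pp N (addnC h2 h1) (isT : i1 != i2)); simpl in eF. have vZ := vgeZ (p%:R ^- (2 * N).+1) vex. apply: (hyp1 _ eF vZ).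
        by have := A3 N.+1 w0 i1; rewrite /Lp /= Lpart_comp Lpart_X scalerDr.
      have eF := Tsum_frob pp N (erefl (h1 + h2)%N) (isT : i2 != i1).
      simpl in eF; rewrite [in RHS](@Tsum_ext p h1 h2 2 N.+1 i2 i1 h2 _ Ph) // in eF.
      apply: (hyp1 _ eF (vgeZ _ vex2)).
      have := A3 N.+1 w0 i2; rewrite /Lp /= Lpart_comp Lpart_X scalerDr. done.
    move=> j m' hm' IH; case: (I2cases j) => ->; rewrite /R /=;
      apply: (Tsum_R pp) => //. all: try exact: vPh. all: try exact: iPh. all: try (move=> ?; exact: A2).
  rewrite (A1 _ w0 i m (ltnSn _)).
  suff -> : frob_sw p h1 h2 i m = (Ph i)@_m by [].
  by case: (I2cases i) => ->; rewrite /frob_sw /Ph /smon /= mcoeffXn eq_sym.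
split => //; split => //; last by right.
by move=> i m; apply: (pint_cong pp (HC i m)); apply: frob_pint.
Qed.
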